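(* Let $G$ be a finite simple graph and $k$ a field, with $R=k[V(G)]$, such that $\operatorname{reg}(R/I(G))\ge 3$, $\operatorname{reg}(R/I(G_{|W}))\le 2$ for every proper subset $W\subsetneq V(G)$, and $|V(G)|\ge 7$. Then there exist vertices $a,b\in V(G)$ with $\{a,b\}\notin E(G)$ and $N_G(a)\cap N_G(b)\neq\emptyset$. *)

(* Defs.v *)
From mathcomp Require Import all_boot all_order all_algebra.
Set Implicit Arguments. Unset Strict Implicit. Unset Printing Implicit Defensive.
Import GRing.Theory.
Local Open Scope ring_scope.

Definition simple_graph (V : finType) (e : rel V) : Prop :=
  symmetric e /\ irreflexive e.

(* beta_i,alpha(R/I) = dim_k Tor_i^R(R/I, k)_alpha, computed (as usual) as the
   i-th homology of the Koszul complex K(x_v, v in W; R/I) in multidegree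
   alpha in N^W.  In multidegree alpha the Koszul complex has k-basis
   { e_T : T subset supp(alpha), x^(alpha - 1_T) not in I }, in homological
   degree #|T|, with differential
      d(e_T) = sum_{s in T} (-1)^{pos_T(s)} x_s * x^(alpha-1_T) e_{T\s},
   the term being 0 when x^(alpha-1_{T\s}) lies in I.
   A monomial x^beta lies in the edge ideal iff some edge {u,v} has
   beta_u > 0 and beta_v > 0.
   ------------------------------------------------------------------------ *)
Section Koszul.
Variables (V : finType) (k : fieldType) (e : rel V) (alpha : {ffun V -> nat}).

Definition std_monomial (beta : V -> nat) : bool :=
  [forall u, forall v, e u v ==> ~~ ((0 < beta u)%N && (0 < beta v)%N)].

Definition kvalid (T : {set V}) : bool :=
  [forall u in T, (0 < alpha u)%N] &&
  std_monomial (fun u => (alpha u - (u \in T))%N).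

Definition kidx (x : 'I_#|{set V}|) : {set V} := enum_val x.

Definition kpos (T : {set V}) (s : V) : nat :=
  #|[set u in T | (enum_rank u < enum_rank s)%N]|.

(* differential, acting on row vectors: row T is d(e_T) *)
Definition kdiff : 'M[k]_#|{set V}| :=
  \matrix_(x, y)
    (if kvalid (kidx x) && kvalid (kidx y) then
       \sum_(s in kidx x)
          (if kidx y == kidx x :\ s then (-1) ^+ kpos (kidx x) s else 0)
     else 0).

Definition kproj (i : nat) : 'M[k]_#|{set V}| :=
  \matrix_(x, y)
    (if (x == y) && kvalid (kidx x) && (#|kidx x| == i)%N then 1 else 0).

(* dim ker d_i - dim im d_{i+1} *)
Definition betti (i : nat) : nat :=
  (\rank (kproj i) - \rank (kproj i *m kdiff) - \rank (kproj i.+1 *m kdiff))%N.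

End Koszul.

Definition mdeg (V : finType) (alpha : {ffun V -> nat}) : nat :=
  (\sum_(v : V) alpha v)%N.

Definition reg_le (V : finType) (k : fieldType) (e : rel V) (W : {set V})
    (r : nat) : Prop :=
  forall (i : nat) (alpha : {ffun V -> nat}),
    [forall v, (v \notin W) ==> (alpha v == 0%N)] ->
    betti k e alpha i <> 0%N -> (mdeg alpha <= i + r)%N.

Definition reg_ge (V : finType) (k : fieldType) (e : rel V) (W : {set V})
    (r : nat) : Prop :=
  ~ reg_le k e W r.-1.

(* Main.v *)
Require Import Defs.
From mathcomp Require Import all_boot all_order all_algebra.
From mathcomp Require Import ring.
From Stdlib Require Import Classical.
Set Implicit Arguments. Unset Strict Implicit. Unset Printing Implicit Defensive.
Import GRing.Theory.
Local Open Scope ring_scope.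

Lemma rank_homotopy (F : fieldType) n (P Q D H : 'M[F]_n) :
  P *m P = P -> P *m (H *m D + D *m H) = P -> P *m H = P *m H *m Q ->
  (\rank P <= \rank (P *m D) + \rank (Q *m D))%N.
Proof.
move=> PP PH PHQ.
rewrite -{1}(mxrank_mul_ker P D) leq_add2l; apply: mxrankS.
set X := (P :&: kermx D)%MS.
have XP : (X <= P)%MS := capmxSl _ _.
have XD : X *m D = 0 by apply/sub_kermxP; apply: capmxSr.
have XXP : X = X *m P by move/submxP: XP => [M ->]; rewrite -mulmxA PP.
have -> : X = (X *m (P *m H)) *m (Q *m D).
  have E1 : X *m (P *m H) *m (Q *m D) = X *m (P *m H) *m D.
    by rewrite (mulmxA (X *m (P *m H))) -(mulmxA X (P *m H)) -PHQ.
  rewrite E1 {1}XXP -{1}PH mulmxDr mulmxDr.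
  have -> : X *m (P *m (D *m H)) = 0.
    by rewrite (mulmxA P) !mulmxA -XXP XD !mul0mx.
  by rewrite addr0 !mulmxA.
exact: submxMl.
Qed.

Section Kos.
Variables (V : finType) (k : fieldType) (e : rel V) (alpha : {ffun V -> nat}).
Local Notation n := #|{set V}|.
Local Notation D := (kdiff k e alpha).
Local Notation P := (kproj k e alpha).
Local Notation valid := (kvalid e alpha).
Definition dl (S : {set V}) : 'rV[k]_n := locked ('e_(enum_rank S)).

Lemma dlE S y : dl S 0 y = (S == kidx y)%:R.
Proof.
rewrite /dl -lock mxE eqxx /= /kidx.
suff -> : (y == enum_rank S) = (S == enum_val y) by [].
by apply/eqP/eqP => [->|->]; rewrite ?enum_rankK ?enum_valK.
Qed.

Lemma dlM S p (M : 'M[k]_(n, p)) : dl S *m M = row (enum_rank S) M.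
Proof. by rewrite /dl -lock rowE. Qed.

Lemma rowD x : row x D = if valid (kidx x) then
  \sum_(s in kidx x) (if valid (kidx x :\ s) then
       (-1) ^+ kpos (kidx x) s *: dl (kidx x :\ s) else 0) else 0.
Proof.
apply/rowP => y; rewrite !mxE; case vx: (valid (kidx x)) => /=; last by rewrite mxE.
rewrite summxE; case vy: (valid (kidx y)).
  apply: eq_bigr => s _; case: eqP => [E|ne]; first by rewrite -E vy !mxE dlE eqxx mulr1.
  case: ifP => _; last by rewrite mxE.
  by rewrite !mxE dlE; case: eqP => [E|_]; [case: ne | rewrite mulr0].
rewrite big1 // => s _; case: ifP => vs; last by rewrite mxE.
rewrite !mxE dlE; case: eqP => [E|]; last by rewrite mulr0.
by rewrite -E vs in vy.
Qed.

Lemma rowPr x i : row x (P i) =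
  if valid (kidx x) && (#|kidx x| == i)%N then dl (kidx x) else 0.
Proof.
apply/rowP => y; rewrite !mxE -andbA; case c: (valid (kidx x) && _) => /=; last first.
  by rewrite andbF mxE.
rewrite andbT dlE; case: (x =P y) => [<-|ne] /=; first by rewrite eqxx.
by case: eqP => // /enum_val_inj.
Qed.

Lemma kposU1 (S : {set V}) x s : kpos (x |: S) s =
  (kpos S s + ((x \notin S) && (enum_rank x < enum_rank s)%N))%N.
Proof.
rewrite /kpos; case: (boolP (x \in S)) => xS /=.
  have -> : x |: S = S by apply/setP => u; rewrite in_setU1; case: eqP => // ->.
  by rewrite addn0.
case: ltnP => lt.
  have -> : [set u in x |: S | (enum_rank u < enum_rank s)%N] =
            x |: [set u in S | (enum_rank u < enum_rank s)%N].
    by apply/setP => u; rewrite !inE; case: eqP => // ->; rewrite lt.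
  by rewrite cardsU1 inE (negbTE xS) addnC.
have -> : [set u in x |: S | (enum_rank u < enum_rank s)%N] =
          [set u in S | (enum_rank u < enum_rank s)%N].
  by apply/setP => u; rewrite !inE; case: eqP => // ->; rewrite ltnNge lt /= andbF.
by rewrite /= addn0.
Qed.

Lemma sgnsq m : (-1) ^+ m * (-1) ^+ m = 1 :> k.
Proof. by rewrite -expr2 sqrr_sign. Qed.

Lemma kidx_rank (S : {set V}) : kidx (enum_rank S) = S.
Proof. by rewrite /kidx enum_rankK. Qed.

Lemma rank_kidx (x : 'I_n) : enum_rank (kidx x) = x.
Proof. by rewrite /kidx enum_valK. Qed.

Lemma row_addm (x : 'I_n) (A B : 'M[k]_n) : row x (A + B) = row x A + row x B.
Proof. by rewrite !rowE mulmxDr. Qed.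

Section Cone.
Variable v : V.
Hypothesis inv : forall T, valid (T :\ v) = valid T.

Lemma validU1 T : valid (v |: T) = valid T.
Proof.
rewrite -inv -[RHS]inv.
have -> : (v |: T) :\ v = T :\ v by apply/setP => u; rewrite !inE; case: eqP.
by [].
Qed.

Definition Hm : 'M[k]_n := \matrix_(x, y)
  (if (v \notin kidx x) && (kidx y == v |: kidx x) then (-1) ^+ kpos (kidx y) v else 0).

Lemma rowH x : row x Hm = if v \notin kidx x then
   (-1) ^+ kpos (v |: kidx x) v *: dl (v |: kidx x) else 0.
Proof.
apply/rowP => y; rewrite !mxE; case: (v \notin kidx x) => /=; last by rewrite mxE.
rewrite !mxE dlE eq_sym; case: eqP => [->|_]; first by rewrite mulr1.
by rewrite mulr0.
Qed.

Lemma homot x : valid (kidx x) -> row x (Hm *m D + D *m Hm) = dl (kidx x).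
Proof.
set T := kidx x => vT.
rewrite row_addm !row_mul rowD rowH vT.
case: (boolP (v \in T)) => vinT /=.
  rewrite mul0mx add0r mulmx_suml (bigD1 v) //= big1 ?addr0.
    by rewrite inv vT -scalemxAl dlM rowH kidx_rank !inE eqxx /= scalerA setD1K //
       sgnsq scale1r.
  move=> s /andP[sT nsv]; case: ifP => _; last by rewrite mul0mx.
  rewrite -scalemxAl dlM rowH kidx_rank !inE eq_sym (negbTE nsv) /=.
  by rewrite vinT /= scaler0.
rewrite -scalemxAl dlM rowD kidx_rank validU1 vT.
rewrite big_setU1 //= setU1K // vT scalerDr scalerA sgnsq scale1r -addrA.
rewrite -[RHS]addr0; congr (_ + _).
rewrite scaler_sumr mulmx_suml -big_split big1 // => s sT /=.
have sv : s != v by apply: contraNneq vinT => <-.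
have E : (v |: T) :\ s = v |: (T :\ s).
  by apply/setP => u; rewrite !inE; case: (u =P v) => // ->; rewrite eq_sym sv.
rewrite E validU1.
case: ifP => vs; last by rewrite mul0mx scaler0 addr0.
rewrite -scalemxAl dlM rowH kidx_rank !inE (negbTE vinT) andbF /=.
rewrite !scalerA -scalerDl; apply/eqP; rewrite scaler_eq0; apply/orP; left; apply/eqP.
rewrite !kposU1 vinT /= !ltnn andbF !addn0.
have -> : kpos (kidx x) v = (kpos (T :\ s) v + (enum_rank s < enum_rank v)%N)%N.
  by rewrite -{1}(setD1K sT) kposU1 !inE eqxx.
rewrite !exprD.
have [lt|gt] : (enum_rank s < enum_rank v)%N \/ (enum_rank v < enum_rank s)%N.
  case: ltngtP => //; [by left | by right | move/val_inj/enum_rank_inj => E'].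
  by rewrite E' eqxx in sv.
  rewrite /T lt ltnNge (ltnW lt) /= expr1 expr0.
  by move: ((-1) ^+ kpos (kidx x :\ s) v) ((-1) ^+ kpos (kidx x) s) => A B; ring.
rewrite /T gt ltnNge (ltnW gt) /= expr1 expr0.
by move: ((-1) ^+ kpos (kidx x :\ s) v) ((-1) ^+ kpos (kidx x) s) => A B; ring.
Qed.
Lemma cone_betti i : betti k e alpha i = 0%N.
Proof.
rewrite /betti; apply/eqP; rewrite -subnDA subn_eq0.
apply: (@rank_homotopy _ _ _ _ _ Hm).
- apply/row_matrixP => x; rewrite row_mul rowPr; case: ifP => c; last by rewrite mul0mx.
  by rewrite dlM rank_kidx rowPr c.
- apply/row_matrixP => x; rewrite row_mul rowPr; case: ifP => c; last by rewrite mul0mx.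
  by move/andP: c => [vx _]; rewrite dlM rank_kidx homot.
- apply/row_matrixP => x; rewrite !row_mul rowPr; case: ifP => c; last by rewrite !mul0mx.
  move/andP: c => [vx /eqP sz].
  rewrite dlM rank_kidx rowH; case: ifP => nv; last by rewrite mul0mx.
  by rewrite -scalemxAl dlM rowPr kidx_rank validU1 vx cardsU1 nv sz eqxx.
Qed.
End Cone.
End Kos.

Definition rk (V : finType) (u : V) : nat := enum_rank u.

Lemma cmpC (V : finType) (u w : V) : u != w -> (rk w < rk u)%N = ~~ (rk u < rk w)%N.
Proof.
move=> uw; case: (ltngtP (rk u) (rk w)) => // /val_inj /enum_rank_inj E.
by rewrite E eqxx in uw.
Qed.

Lemma sign_cancel (k : fieldType) m1 m2 m3 m4 : odd (m1 + m2 + m3 + m4) ->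
  (-1) ^+ m1 * (-1) ^+ m2 + (-1) ^+ m3 * (-1) ^+ m4 = 0 :> k.
Proof.
rewrite -!exprD -(signr_odd _ (m1 + m2)) -(signr_odd _ (m3 + m4)) -addnA oddD.
by case: (odd (m1 + m2)); case: (odd (m3 + m4)) => //= _; rewrite ?expr1 ?expr0 ?subrr // addrC subrr.
Qed.

Lemma ltb (x y : bool) : (0 < (x:nat) - (y:nat))%N = x && ~~ y.
Proof. by case: x; case: y. Qed.

Lemma cardIdU1 (V : finType) (x : V) (S : {set V}) (Q : pred V) : x \notin S ->
  #|[set u in x |: S | Q u]| = (Q x + #|[set u in S | Q u]|)%N.
Proof.
move=> xS; case Qx: (Q x).
  have -> : [set u in x |: S | Q u] = x |: [set u in S | Q u].
    by apply/setP => u; rewrite !inE; case: eqP => // ->; rewrite Qx.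
  by rewrite cardsU1 inE (negbTE xS).
have -> : [set u in x |: S | Q u] = [set u in S | Q u].
  by apply/setP => u; rewrite !inE; case: eqP => // ->; rewrite Qx !andbF.
by [].
Qed.

Lemma cardId1 (V : finType) (x : V) (Q : pred V) : #|[set u in [set x] | Q u]| = Q x.
Proof.
case Qx: (Q x).
  have -> : [set u in [set x] | Q u] = [set x].
    by apply/setP => u; rewrite !inE; case: eqP => // ->.
  by rewrite cards1.
have -> : [set u in [set x] | Q u] = set0.
  by apply/setP => u; rewrite !inE; case: eqP => // ->; rewrite Qx.
by rewrite cards0.
Qed.

Section Cube.
Variables (V : finType) (k : fieldType) (e : rel V) (a a' b b' c c' : V).
Hypothesis esym : symmetric e.
Hypothesis eirr : irreflexive e.
Hypotheses (e1 : e a a') (e2 : e b b') (e3 : e c c').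
Hypotheses (d01 : a != a') (d02 : a != b) (d03 : a != b') (d04 : a != c) (d05 : a != c') (d12 : a' != b) (d13 : a' != b') (d14 : a' != c) (d15 : a' != c') (d23 : b != b') (d24 : b != c) (d25 : b != c') (d34 : b' != c) (d35 : b' != c') (d45 : c != c').
Hypotheses (n02 : ~~ e a b) (n03 : ~~ e a b') (n04 : ~~ e a c) (n05 : ~~ e a c') (n12 : ~~ e a' b) (n13 : ~~ e a' b') (n14 : ~~ e a' c) (n15 : ~~ e a' c') (n24 : ~~ e b c) (n25 : ~~ e b c') (n34 : ~~ e b' c) (n35 : ~~ e b' c').
Let q01 : (a == a') = false := negbTE d01.
Let q10 : (a' == a) = false := ltac:(by rewrite eq_sym q01).
Let q02 : (a == b) = false := negbTE d02.
Let q20 : (b == a) = false := ltac:(by rewrite eq_sym q02).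
Let q03 : (a == b') = false := negbTE d03.
Let q30 : (b' == a) = false := ltac:(by rewrite eq_sym q03).
Let q04 : (a == c) = false := negbTE d04.
Let q40 : (c == a) = false := ltac:(by rewrite eq_sym q04).
Let q05 : (a == c') = false := negbTE d05.
Let q50 : (c' == a) = false := ltac:(by rewrite eq_sym q05).
Let q12 : (a' == b) = false := negbTE d12.
Let q21 : (b == a') = false := ltac:(by rewrite eq_sym q12).
Let q13 : (a' == b') = false := negbTE d13.
Let q31 : (b' == a') = false := ltac:(by rewrite eq_sym q13).
Let q14 : (a' == c) = false := negbTE d14.
Let q41 : (c == a') = false := ltac:(by rewrite eq_sym q14).
Let q15 : (a' == c') = false := negbTE d15.
Let q51 : (c' == a') = false := ltac:(by rewrite eq_sym q15).
Let q23 : (b == b') = false := negbTE d23.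
Let q32 : (b' == b) = false := ltac:(by rewrite eq_sym q23).
Let q24 : (b == c) = false := negbTE d24.
Let q42 : (c == b) = false := ltac:(by rewrite eq_sym q24).
Let q25 : (b == c') = false := negbTE d25.
Let q52 : (c' == b) = false := ltac:(by rewrite eq_sym q25).
Let q34 : (b' == c) = false := negbTE d34.
Let q43 : (c == b') = false := ltac:(by rewrite eq_sym q34).
Let q35 : (b' == c') = false := negbTE d35.
Let q53 : (c' == b') = false := ltac:(by rewrite eq_sym q35).
Let q45 : (c == c') = false := negbTE d45.
Let q54 : (c' == c) = false := ltac:(by rewrite eq_sym q45).
Let f02 : e a b = false := negbTE n02.
Let f20 : e b a = false := ltac:(by rewrite esym f02).
Let f03 : e a b' = false := negbTE n03.
Let f30 : e b' a = false := ltac:(by rewrite esym f03).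
Let f04 : e a c = false := negbTE n04.
Let f40 : e c a = false := ltac:(by rewrite esym f04).
Let f05 : e a c' = false := negbTE n05.
Let f50 : e c' a = false := ltac:(by rewrite esym f05).
Let f12 : e a' b = false := negbTE n12.
Let f21 : e b a' = false := ltac:(by rewrite esym f12).
Let f13 : e a' b' = false := negbTE n13.
Let f31 : e b' a' = false := ltac:(by rewrite esym f13).
Let f14 : e a' c = false := negbTE n14.
Let f41 : e c a' = false := ltac:(by rewrite esym f14).
Let f15 : e a' c' = false := negbTE n15.
Let f51 : e c' a' = false := ltac:(by rewrite esym f15).
Let f24 : e b c = false := negbTE n24.
Let f42 : e c b = false := ltac:(by rewrite esym f24).
Let f25 : e b c' = false := negbTE n25.
Let f52 : e c' b = false := ltac:(by rewrite esym f25).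
Let f34 : e b' c = false := negbTE n34.
Let f43 : e c b' = false := ltac:(by rewrite esym f34).
Let f35 : e b' c' = false := negbTE n35.
Let f53 : e c' b' = false := ltac:(by rewrite esym f35).
Let c10 : (rk a' < rk a)%N = ~~ (rk a < rk a')%N := cmpC d01.
Let c20 : (rk b < rk a)%N = ~~ (rk a < rk b)%N := cmpC d02.
Let c30 : (rk b' < rk a)%N = ~~ (rk a < rk b')%N := cmpC d03.
Let c40 : (rk c < rk a)%N = ~~ (rk a < rk c)%N := cmpC d04.
Let c50 : (rk c' < rk a)%N = ~~ (rk a < rk c')%N := cmpC d05.
Let c21 : (rk b < rk a')%N = ~~ (rk a' < rk b)%N := cmpC d12.
Let c31 : (rk b' < rk a')%N = ~~ (rk a' < rk b')%N := cmpC d13.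
Let c41 : (rk c < rk a')%N = ~~ (rk a' < rk c)%N := cmpC d14.
Let c51 : (rk c' < rk a')%N = ~~ (rk a' < rk c')%N := cmpC d15.
Let c32 : (rk b' < rk b)%N = ~~ (rk b < rk b')%N := cmpC d23.
Let c42 : (rk c < rk b)%N = ~~ (rk b < rk c)%N := cmpC d24.
Let c52 : (rk c' < rk b)%N = ~~ (rk b < rk c')%N := cmpC d25.
Let c43 : (rk c < rk b')%N = ~~ (rk b' < rk c)%N := cmpC d34.
Let c53 : (rk c' < rk b')%N = ~~ (rk b' < rk c')%N := cmpC d35.
Let c54 : (rk c' < rk c)%N = ~~ (rk c < rk c')%N := cmpC d45.
Let DQ := (q01, q10, q02, q20, q03, q30, q04, q40, q05, q50, q12, q21, q13, q31, q14, q41, q15, q51, q23, q32, q24, q42, q25, q52, q34, q43, q35, q53, q45, q54).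
Let FE := (f02, f20, f03, f30, f04, f40, f05, f50, f12, f21, f13, f31, f14, f41, f15, f51, f24, f42, f25, f52, f34, f43, f35, f53).
Let CR := (c10, c20, c30, c40, c50, c21, c31, c41, c51, c32, c42, c52, c43, c53, c54).
Definition W : {set V} := a |: (a' |: (b |: (b' |: (c |: [set c'])))).
Definition al : {ffun V -> nat} := [ffun u => ((u \in W) : nat)].
Definition met (S : {set V}) := [&& (a \in S) || (a' \in S), (b \in S) || (b' \in S) & (c \in S) || (c' \in S)].
Definition sg3 (x y z : V) : k := (-1) ^+ ((rk y < rk x) + (rk z < rk x) + (rk z < rk y))%N.
Definition sgn (S : {set V}) := sg3 (if a \in S then a else a') (if b \in S then b else b')
   (if c \in S then c else c').

Lemma bigW (R : Type) (idx : R) (op : Monoid.com_law idx) (F : V -> R) :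
  \big[op/idx]_(u in W) F u = op (F a) (op (F a') (op (F b) (op (F b') (op (F c) (F c'))))).
Proof. by rewrite /W !big_setU1 ?big_set1 //= !inE ?DQ. Qed.

Lemma cardIdW (U : {set V}) (Q : pred V) : U \subset W -> #|[set u in U | Q u]| =
  ((a \in U) && Q a + ((a' \in U) && Q a' + ((b \in U) && Q b + ((b' \in U) && Q b'
   + ((c \in U) && Q c + (c' \in U) && Q c')))))%N.
Proof.
move=> sUW.
have -> : [set u in U | Q u] = [set u in W | (u \in U) && Q u].
  apply/setP => u; rewrite [LHS]inE [RHS]inE.
  by case: (boolP (u \in U)) => uU; [rewrite (subsetP sUW u uU) | rewrite andbF].
rewrite /W !cardIdU1 ?cardId1 //= !inE ?DQ //.
Qed.


Lemma aW : a \in W. Proof. by rewrite /W !inE eqxx. Qed.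
Lemma a'W : a' \in W. Proof. by rewrite /W !inE eqxx ?orbT. Qed.
Lemma bW : b \in W. Proof. by rewrite /W !inE eqxx ?orbT. Qed.
Lemma b'W : b' \in W. Proof. by rewrite /W !inE eqxx ?orbT. Qed.
Lemma cW : c \in W. Proof. by rewrite /W !inE eqxx ?orbT. Qed.
Lemma c'W : c' \in W. Proof. by rewrite /W !inE eqxx ?orbT. Qed.

Ltac caseW H := move: H; rewrite /W !inE =>
  /orP[/eqP->|/orP[/eqP->|/orP[/eqP->|/orP[/eqP->|/orP[/eqP->|/eqP->]]]]].

Lemma validE S : kvalid e al S = (S \subset W) && met S.
Proof.
rewrite /kvalid /std_monomial; congr andb.
  apply/forall_inP/subsetP => H u uS; first by move: (H u uS); rewrite ffunE lt0b.
  by rewrite ffunE lt0b; apply: H.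
apply/idP/idP.
  move=> /forallP H; apply/and3P; split; apply/negPn/negP => /norP [na na'].
  - by move: (H a) => /forallP /(_ a') /implyP /(_ e1);
      rewrite !ffunE !ltb aW a'W (negbTE na) (negbTE na').
  - by move: (H b) => /forallP /(_ b') /implyP /(_ e2);
      rewrite !ffunE !ltb bW b'W (negbTE na) (negbTE na').
  - by move: (H c) => /forallP /(_ c') /implyP /(_ e3);
      rewrite !ffunE !ltb cW c'W (negbTE na) (negbTE na').
move=> Hm; apply/forallP => u; apply/forallP => w; apply/implyP => euw; apply/negP.
rewrite !ffunE !ltb => /andP [/andP [uW uS] /andP [wW wS]].
move: euw uS wS Hm; rewrite /met.
caseW uW; caseW wW => euw uS wS; rewrite ?eirr ?FE in euw => //;
  by rewrite (negbTE uS) (negbTE wS) /= ?andbF.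
Qed.

Lemma kposW (U : {set V}) s : U \subset W -> kpos U s =
  ((a \in U) && (rk a < rk s) + ((a' \in U) && (rk a' < rk s) + ((b \in U) && (rk b < rk s)
  + ((b' \in U) && (rk b' < rk s) + ((c \in U) && (rk c < rk s) + (c' \in U) && (rk c' < rk s))))))%N.
Proof. by move=> sUW; exact: (cardIdW (fun u => (rk u < rk s)%N) sUW). Qed.

Lemma cardW (U : {set V}) : U \subset W -> #|U| =
  ((a \in U) + ((a' \in U) + ((b \in U) + ((b' \in U) + ((c \in U) + (c' \in U))))))%N.
Proof.
move=> sUW; have := cardIdW predT sUW; rewrite !andbT => <-.
by apply: eq_card => u; rewrite !inE andbT.
Qed.

Lemma gsum0 (U : {set V}) : U \subset W -> met U -> #|U| = 4%N ->
  \sum_(s in U) (if kvalid e al (U :\ s) then (-1) ^+ kpos U s * sgn (U :\ s) else 0) = 0.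
Proof.
move=> sUW mU cU.
rewrite big_mkcond.
have -> : \sum_s (if s \in U then (if kvalid e al (U :\ s) then (-1) ^+ kpos U s * sgn (U :\ s) else 0) else 0)
   = \sum_(s in W) (if s \in U then (if kvalid e al (U :\ s) then (-1) ^+ kpos U s * sgn (U :\ s) else 0) else 0).
  rewrite [RHS]big_mkcond; apply: eq_bigr => s _.
  by case: (boolP (s \in U)) => sU; [rewrite (subsetP sUW s sU) | case: (s \in W)].
have sub s : U :\ s \subset W by apply: subset_trans (subD1set U s) sUW.
rewrite bigW !validE !sub /= !(kposW _ sUW) /met /sgn !inE ?DQ /=.
move: mU cU; rewrite /met (cardW sUW).
case: (a \in U); case: (a' \in U); case: (b \in U); case: (b' \in U); case: (c \in U);
  case: (c' \in U) => //= _ _.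
all: rewrite ?eqxx /= ?ltnn /= ?add0r ?addr0 /sg3.
all: apply: sign_cancel; rewrite ?CR.
all: repeat match goal with |- context [ (rk ?x < rk ?y)%N ] => case: (rk x < rk y)%N end.
all: by [].
Qed.

Definition cv (S : {set V}) : k := if kvalid e al S && (#|S| == 3)%N then sgn S else 0.
Definition cvec : 'cV[k]_#|{set V}| := \col_y cv (kidx y).

Lemma valid_ge3 S : kvalid e al S -> (3 <= #|S|)%N.
Proof.
rewrite validE => /andP[sSW]; rewrite (cardW sSW) /met.
by case: (a \in S); case: (a' \in S); case: (b \in S); case: (b' \in S); case: (c \in S);
  case: (c' \in S).
Qed.

Lemma P3D : kproj k e al 3 *m kdiff k e al = 0.
Proof.
apply/row_matrixP => x; rewrite row_mul rowPr row0; case: ifP => [/andP[vx /eqP sx]|_];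
  last by rewrite mul0mx.
rewrite dlM rank_kidx rowD vx big1 // => s sT; case: ifP => // /valid_ge3.
by move: sx; rewrite (cardsD1 s) sT add1n => [[->]].
Qed.

Lemma card4 (T : {set V}) s : s \in T -> #|T| = 4%N -> #|T :\ s| = 3%N.
Proof. by move=> sT; rewrite (cardsD1 s) sT add1n => [[]]. Qed.

Lemma P4sub : (kproj k e al 4 *m kdiff k e al <= kproj k e al 3)%MS.
Proof.
have E : kproj k e al 4 *m kdiff k e al *m kproj k e al 3 = kproj k e al 4 *m kdiff k e al.
  apply/row_matrixP => x; rewrite !row_mul rowPr; case: ifP => [/andP[vx /eqP sx]|_];
    last by rewrite !mul0mx.
  rewrite dlM rank_kidx rowD vx mulmx_suml; apply: eq_bigr => s sT.
  case: ifP => vs; last by rewrite mul0mx.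
  by rewrite -scalemxAl dlM rowPr kidx_rank vs (card4 sT sx) eqxx.
by rewrite -E; apply: submxMl.
Qed.

Lemma cocyc : kproj k e al 4 *m kdiff k e al *m cvec = 0.
Proof.
apply/row_matrixP => x; rewrite !row_mul rowPr row0; case: ifP => [/andP[vx /eqP sx]|_];
  last by rewrite !mul0mx.
rewrite dlM rank_kidx rowD vx mulmx_suml; apply/rowP => j; rewrite summxE [RHS]mxE.
rewrite -[RHS](gsum0 (U := kidx x)); first last.
- exact: sx.
- by move: vx; rewrite validE => /andP[].
- by move: vx; rewrite validE => /andP[].
apply: eq_bigr => s sT; case: ifP => vs; last by rewrite mul0mx mxE.
rewrite -scalemxAl dlM !mxE kidx_rank /cv vs (card4 sT sx) eqxx /=.
by [].
Qed.

Lemma nzc : kproj k e al 3 *m cvec != 0.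
Proof.
pose T0 := a |: (b |: [set c]).
have v0 : kvalid e al T0.
  by rewrite validE /T0 !subUset !sub1set aW bW cW /met !inE !eqxx ?DQ ?orbT.
have s0 : #|T0| = 3%N by rewrite /T0 !cardsU1 cards1 !inE ?DQ.
apply/eqP => /(congr1 (row (enum_rank T0))) /(congr1 (fun M : 'M[k]_(1,1) => M 0 0)).
rewrite row_mul rowPr kidx_rank v0 s0 eqxx /= dlM !mxE kidx_rank /cv v0 s0 eqxx /=.
by move/eqP; rewrite /sgn /sg3 signr_eq0.
Qed.

Lemma betti3 : betti k e al 3 != 0%N.
Proof.
rewrite /betti P3D mxrank0 subn0 subn_eq0 -ltnNge.
case: (mxrank_leqif_sup P4sub) => le eqc; rewrite ltn_neqAle le andbT eqc.
apply/negP => /submxP [M EA]; move/eqP: nzc; apply.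
by rewrite EA -mulmxA cocyc mulmx0.
Qed.

Lemma mdeg_al : mdeg al = 6%N.
Proof.
rewrite /mdeg (eq_bigr (fun u => ((u \in W) : nat))) => [|u _]; last by rewrite ffunE.
have -> : \sum_u ((u \in W) : nat) = \sum_(u in W) 1%N.
  by rewrite [RHS]big_mkcond; apply: eq_bigr => u _; case: (u \in W).
by rewrite sum1_card /W !cardsU1 cards1 !inE ?DQ.
Qed.

Lemma card_W : #|W| = 6%N.
Proof. by rewrite /W !cardsU1 cards1 !inE ?DQ. Qed.

Lemma al_supp : [forall v, (v \notin W) ==> (al v == 0%N)].
Proof. by apply/forallP => v; apply/implyP => vW; rewrite ffunE (negbTE vW). Qed.

Lemma cube_contra : (forall W0 : {set V}, W0 \proper [set: V] -> reg_le k e W0 2) ->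
  (7 <= #|V|)%N -> False.
Proof.
move=> Hle H7.
have pW : W \proper [set: V].
  by rewrite properT; apply/negP => /eqP E; move: H7; rewrite -cardsT -E card_W.
move/eqP: betti3 => hb.
by have := Hle W pW 3 al al_supp hb; rewrite mdeg_al.
Qed.

End Cube.

Section Inv.
Variables (V : finType) (e : rel V) (alpha : {ffun V -> nat}) (v : V).

Lemma inv_first T : (0 < alpha v)%N ->
  [forall u in T :\ v, (0 < alpha u)%N] = [forall u in T, (0 < alpha u)%N].
Proof.
move=> av; apply/forall_inP/forall_inP => H u uT.
  by case: (u =P v) => [->|uv] //; apply: H; rewrite !inE uT andbT; apply/eqP.
by apply: H; move: uT; rewrite !inE => /andP[].
Qed.

Lemma inv_big : (1 < alpha v)%N -> forall T, kvalid e alpha (T :\ v) = kvalid e alpha T.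
Proof.
move=> av T; rewrite /kvalid inv_first ?(ltnW av) //; congr andb.
rewrite /std_monomial; apply: eq_forallb => u; apply: eq_forallb => w.
have P x : (0 < alpha x - (x \in T :\ v))%N = (0 < alpha x - (x \in T))%N.
  rewrite !inE; case: (x =P v) => [->|] //=.
  by rewrite subn0 subn_gt0 (ltnW av) (leq_ltn_trans (leq_b1 _) av).
by rewrite !P.
Qed.

Lemma inv_iso : symmetric e -> (0 < alpha v)%N -> (forall u, ~~ e v u) ->
  forall T, kvalid e alpha (T :\ v) = kvalid e alpha T.
Proof.
move=> esym av iso T; rewrite /kvalid inv_first //; congr andb.
rewrite /std_monomial; apply: eq_forallb => u; apply: eq_forallb => w.
case: (u =P v) => [->|uv]; first by rewrite (negbTE (iso w)).
case: (w =P v) => [->|wv]; first by rewrite esym (negbTE (iso u)).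
rewrite !inE; move/eqP: uv => /negbTE ->; by move/eqP: wv => /negbTE ->.
Qed.
End Inv.



Theorem mainTheorem4 (V : finType) (k : fieldType) (e : rel V) :
  simple_graph e ->
  reg_ge k e [set: V] 3 ->
  (forall W : {set V}, W \proper [set: V] -> reg_le k e W 2) ->
  (7 <= #|V|)%N ->
  exists a b : V, [/\ a != b, ~~ e a b & exists c : V, e a c && e b c].
Proof.
move=> [esym eirr] Hge Hle H7.
apply: NNPP => nG.
have tr : forall x y z, x != y -> e x z -> e y z -> e x y.
  move=> x y z xy exz eyz; apply/negPn/negP => nxy; apply: nG.
  by exists x, y; split => //; exists z; rewrite exz eyz.
apply: Hge => i alpha _ hb.
rewrite leqNgt; apply/negP => lt.
have pos : forall v, (0 < alpha v)%N.
  move=> v; rewrite lt0n; apply/negP => /eqP a0.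
  have sup : [forall u, (u \notin [set: V] :\ v) ==> (alpha u == 0%N)].
    by apply/forallP => u; apply/implyP; rewrite !inE andbT negbK => /eqP ->; rewrite a0.
  have := Hle ([set: V] :\ v) (properD1 (in_setT v)) i alpha sup hb.
  by rewrite leqNgt lt.
have le1 : forall v, (alpha v <= 1)%N.
  move=> v; rewrite leqNgt; apply/negP => gt; apply: hb.
  exact: (cone_betti k (inv_big e gt)).
have a1 : forall v, alpha v = 1%N by move=> v; apply/eqP; rewrite eqn_leq le1 pos.
have noiso : forall v, exists u, e v u.
  move=> v; apply: NNPP => nex; apply: hb; apply: (cone_betti k (v := v)).
  apply: inv_iso => // u; apply/negP => evu; apply: nex; by exists u.
case: (pickP (fun x : 'I_#|{set V}| => kvalid e alpha (kidx x) && (#|kidx x| == i)%N)) =>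
  [x /andP[vT /eqP sT] | none]; last first.
  apply: hb; rewrite /betti.
  have -> : kproj k e alpha i = 0.
    by apply/matrixP => x y; rewrite !mxE -andbA; move: (none x) => /= ->; rewrite andbF.
  by rewrite mxrank0.
set T := kidx x in vT sT.
have md : mdeg alpha = #|V|.
  by rewrite /mdeg (eq_bigr (fun=> 1%N)) ?sum1_card // => u _; rewrite a1.
have c3 : (2 < #|~: T|)%N.
  by move: lt; rewrite md -(cardsC T) sT /= ltn_add2l.
case/card_gt2P: c3 => x0 [y0 [z0 [[xT yT zT] [dxy dyz dzx]]]].
rewrite !inE in xT yT zT.
have ind : forall u w, u \notin T -> w \notin T -> ~~ e u w.
  move=> u w uT wT; apply/negP => euw.
  move: vT => /andP [_ /forallP /(_ u) /forallP /(_ w) /implyP /(_ euw)].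
  by rewrite !a1 (negbTE uT) (negbTE wT).
have cross : forall p p' q q', ~~ e p q -> e p p' -> e q q' -> p != q ->
  [/\ [/\ p != q', p' != q & p' != q'], ~~ e p q', ~~ e p' q & ~~ e p' q'].
  move=> p p' q q' npq epp eqq dpq.
  have d1 : p != q' by apply: contraNneq npq => ->; rewrite esym.
  have d2 : p' != q by apply: contraNneq npq => <-.
  have d3 : p' != q' by apply: contraNneq npq => E; apply: (tr p q p') => //; rewrite E.
  have n1 : ~~ e p q' by apply: contraNN npq => epq; apply: (tr p q q').
  have n2 : ~~ e p' q.
    apply: contraNN npq => epq; rewrite esym; apply: (tr q p p') => //; first by rewrite eq_sym.
    by rewrite esym.
  have n3 : ~~ e p' q'.
    apply: contraNN n1 => epq; apply: (tr p q' p') => //; by rewrite esym.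
  by [].
case: (noiso x0) => x1 ex; case: (noiso y0) => y1 ey; case: (noiso z0) => z1 ez.
have nxy := ind _ _ xT yT; have nxz := ind _ _ xT zT; have nyz := ind _ _ yT zT.
have dzx' : x0 != z0 by rewrite eq_sym.
case: (cross _ _ _ _ nxy ex ey dxy) => [[d1 d2 d3] n1 n2 n3].
case: (cross _ _ _ _ nxz ex ez dzx') => [[d4 d5 d6] n4 n5 n6].
case: (cross _ _ _ _ nyz ey ez dyz) => [[d7 d8 d9] n7 n8 n9].
have dx : x0 != x1 by apply: contraTneq ex => ->; rewrite eirr.
have dy : y0 != y1 by apply: contraTneq ey => ->; rewrite eirr.
have dz : z0 != z1 by apply: contraTneq ez => ->; rewrite eirr.
apply: (@cube_contra V k e x0 x1 y0 y1 z0 z1) => //.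
Qed.
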